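(* Let $\gamma\in(1,2]$, $\delta>0$, $L>0$. Assume that $f$ is convex and $L$-smooth relative to $d$ on $Q$, that $V$ satisfies the triangular scaling property with scaling factor $\gamma$, and that for every $y\in Q$ the pair $(f_\delta(y),\nabla f_\delta(y))$ is a $(\delta,L)$-oracle of $f$ at $y$. Then the sequences $\{\theta_k\},\{x_k\},\{z_k\}$ generated by Algorithm AccBPGM-1 satisfy, for every $k\ge0$ and every $x\in Q$, $$\frac{1}{\theta_k^{\gamma}}\big(f(x_{k+1})-f(x)\big)+LV(x,z_{k+1})\le\frac{1-\theta_k}{\theta_k^{\gamma}}\big(f(x_k)-f(x)\big)+LV(x,z_k)+\frac{\delta}{\theta_k^{\gamma}}.$$
   Context: Setting. $\mathbb{E}$ is a finite-dimensional real vector space with a norm $\|\cdot\|$ and dual space $\mathbb{E}^*$; $\langle g,x\rangle$ denotes the value of $g\in\mathbb{E}^*$ at $x\in\mathbb{E}$. $Q\subset\mathbb{E}$ is a closed convex set. $f:Q\to\mathbb{R}$ is convex and differentiable on an open set containing the relative interior $\mathrm{rint}\,Q$. The prox-function $d:Q\to\mathbb{R}$ is continuously differentiable and $1$-strongly convex with respect to $\|\cdot\|$. The Bregman divergence is $V(x,y)=d(x)-d(y)-\langle\nabla d(y),x-y\rangle$. All minimization subproblems appearing in the algorithms are assumed to have minimizers. Relative smoothness: $f$ is $L$-smooth relative to $d$ on $Q$ if $f(y)\le f(x)+\langle\nabla f(x),y-x\rangle+LV(y,x)$ for all $x\in\mathrm{rint}\,Q$, $y\in Q$. Triangular scaling property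 with factor $\gamma>0$: $V((1-\theta)x+\theta z,(1-\theta)x+\theta\tilde z)\le\theta^{\gamma}V(z,\tilde z)$ for all $x,z,\tilde z\in Q$ and all $\theta\in[0,1]$. $(\delta,L)$-oracle: a pair $(f_\delta(y),\nabla f_\delta(y))\in\mathbb{R}\times\mathbb{E}^*$ is a $(\delta,L)$-oracle of $f$ at $y$ if $0\le f(x)-\big(f_\delta(y)+\langle\nabla f_\delta(y),x-y\rangle\big)\le LV(x,y)+\delta$ for all $x\in Q$. Notation: $g(x|y):=f_\delta(y)+\langle\nabla f_\delta(y),x-y\rangle$. Algorithm AccBPGM-1. Input: $x_0\in\mathrm{rint}\,Q$, $\gamma\in(1,2]$, $\delta>0$, $L>0$. Set $z_0=x_0$, $\theta_0=1$. For $k=0,1,2,\dots$: $y_k=(1-\theta_k)x_k+\theta_kz_k$; $z_{k+1}=\arg\min_{z\in Q}\{g(z|y_k)+\theta_k^{\gamma-1}LV(z,z_k)\}$; $x_{k+1}=(1-\theta_k)x_k+\theta_kz_{k+1}$; choose $\theta_{k+1}\in(0,1]$ with $\frac{1-\theta_{k+1}}{\theta_{k+1}^{\gamma}}\le\frac{1}{\theta_k^{\gamma}}$. *)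

(* Defs.v *)
(* E = 'rV[R]_n (finite-dimensional
   real vector space), equipped with an arbitrary norm [nrm]; the dual space
   E^* is represented by linear functionals {linear E -> R}. *)
From HB Require Import structures.
From mathcomp Require Import all_boot all_order all_algebra.
From mathcomp Require Import all_classical all_reals all_analysis.
Set Implicit Arguments. Unset Strict Implicit. Unset Printing Implicit Defensive.
Import Order.TTheory GRing.Theory Num.Theory.
Import numFieldNormedType.Exports.
Local Open Scope classical_set_scope.
Local Open Scope ring_scope.

Section Defs.
Variables (R : realType) (n : nat).
Local Notation E := 'rV[R]_n.

Definition is_norm (nrm : E -> R) : Prop :=
  [/\ forall x, nrm x = 0 -> x = 0,
      forall (a : R) x, nrm (a *: x) = `|a| * nrm x
    & forall x y, nrm (x + y) <= nrm x + nrm y].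

Definition is_convex_set (Q : set E) : Prop :=
  forall x y (t : R), Q x -> Q y -> 0 <= t <= 1 -> Q ((1 - t) *: x + t *: y).

Definition convex_on (Q : set E) (f : E -> R) : Prop :=
  forall x y (t : R), Q x -> Q y -> 0 <= t <= 1 ->
    f ((1 - t) *: x + t *: y) <= (1 - t) * f x + t * f y.

Definition strongly_convex_on (mu : R) (nrm : E -> R) (Q : set E) (f : E -> R) : Prop :=
  forall x y (t : R), Q x -> Q y -> 0 <= t <= 1 ->
    f ((1 - t) *: x + t *: y) <=
      (1 - t) * f x + t * f y - mu / 2 * t * (1 - t) * nrm (x - y) ^+ 2.

Definition affine_hull (Q : set E) : set E :=
  [set x | exists (m : nat) (q : 'I_m -> E) (l : 'I_m -> R),
     [/\ forall i, Q (q i), \sum_i l i = 1 & x = \sum_i l i *: q i]].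

Definition rint (Q : set E) : set E :=
  [set x | Q x /\ exists2 e : R, 0 < e & ball x e `&` affine_hull Q `<=` Q].

Definition Bregman (d : E -> R) (x y : E) : R :=
  d x - d y - ('d d y : {linear E -> R}) (x - y).

Definition rel_smooth (L : R) (d f : E -> R) (Q : set E) : Prop :=
  forall x y, rint Q x -> Q y ->
    f y <= f x + ('d f x : {linear E -> R}) (y - x) + L * Bregman d y x.

Definition triangular_scaling (gam : R) (d : E -> R) (Q : set E) : Prop :=
  forall x z zt (t : R), Q x -> Q z -> Q zt -> 0 <= t <= 1 ->
    Bregman d ((1 - t) *: x + t *: z) ((1 - t) *: x + t *: zt)
      <= t `^ gam * Bregman d z zt.

Definition is_oracle (delta L : R) (d f : E -> R) (Q : set E)
    (y : E) (fy : R) (gy : {linear E -> R}) : Prop :=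
  forall x, Q x ->
    0 <= f x - (fy + gy (x - y)) <= L * Bregman d x y + delta.

End Defs.

(* Main.v *)
Require Import Defs.
From HB Require Import structures.
From mathcomp Require Import all_boot all_order all_algebra.
From mathcomp Require Import all_classical all_reals all_analysis.
From mathcomp Require Import ring lra.
Import Order.TTheory GRing.Theory Num.Theory.
Import numFieldNormedType.Exports.
Local Open Scope classical_set_scope.
Local Open Scope ring_scope.

Lemma fo_lim (R : realType) (n : nat) (d : 'rV[R]_n -> R) (z v : 'rV[R]_n) (A c : R) :
  differentiable d z -> 0 < c ->
  (forall t, 0 < t <= 1 -> 0 <= t * A + c * (d (z + t *: v) - d z)) ->
  0 <= A + c * ('d d z : {linear 'rV[R]_n -> R}) v.
Proof.
move=> dd c0 H.
have dv : derivable d z v by apply: diff_derivable.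
rewrite -deriveE //.
set q := (fun h : R => h^-1 *: ((d \o shift z) (h *: v) - d z)).
have qc : q @ 0^' --> 'D_v d z := dv.
have qr : q @ 0^'+ --> 'D_v d z.
  apply: cvg_trans qc => P /= [e e0 He].
  exists e => // y /= Hy y0; apply: He => //.
  by rewrite gt_eqF.
have : - A / c <= 'D_v d z.
  rewrite -(cvg_lim _ qr) //; apply: limr_ge; first by apply/cvg_ex; eexists; exact: qr.
  near=> t.
  have t0 : 0 < t by near: t; exact: nbhs_right_gt.
  have t1 : t <= 1 by near: t; exists 1 => //= s; rewrite /ball /= sub0r normrN => /ltr_normlW ? ?; lra.
  have := H t; rewrite t0 t1 => /(_ isT).
  move=> h; rewrite /q /=; rewrite ler_pdivrMr // -subr_ge0.
  have -> : t^-1 * (d (t *: v + z) - d z) * c - - A = t^-1 * (t * A + c * (d (z + t *: v) - d z)).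
    by rewrite (addrC z); field; rewrite gt_eqF.
  apply: mulr_ge0 => //; by rewrite invr_ge0 ltW.
move=> h; rewrite -subr_ge0 in h.
have -> : A + c * 'D_v d z = c * ('D_v d z - - A / c) by field; rewrite gt_eqF.
by apply: mulr_ge0 => //; rewrite ltW.
Unshelve. all: by end_near.
Qed.

Lemma alg_tp {R : realFieldType} {c gv gz a1 a2 a3 du dz dz' a12 : R} :
  a12 = a1 + a2 -> 0 <= gv - c * a2 + c * a3 ->
  0 <= gz + gv + c * (du - dz - a12) - (gz + c * (dz' - dz - a1) + c * (du - dz' - a3)).
Proof.
move=> -> h; have -> : gz + gv + c * (du - dz - (a1 + a2)) - (gz + c * (dz' - dz - a1) + c * (du - dz' - a3))
  = gv - c * a2 + c * a3 by ring.
exact: h.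
Qed.

Lemma three_point {R : realType} {n : nat} {d : 'rV[R]_n -> R} {g : {linear 'rV[R]_n -> R}}
  {Q : set 'rV[R]_n} {y z z' u : 'rV[R]_n} {c : R} :
  is_convex_set Q -> Q z' -> Q u -> differentiable d z' -> 0 < c ->
  (forall w, Q w -> g (z' - y) + c * Bregman d z' z <= g (w - y) + c * Bregman d w z) ->
  g (z' - y) + c * Bregman d z' z + c * Bregman d u z' <= g (u - y) + c * Bregman d u z.
Proof.
move=> cQ Qz' Qu dd c0 Hmin.
set Dz := ('d d z : {linear _ -> R}).
set Dz' := ('d d z' : {linear _ -> R}).
set v := u - z'.
have H0 : 0 <= g v - c * Dz v + c * Dz' v.
  have := @fo_lim _ _ d z' v (g v - c * Dz v) c dd c0. move=> HH. apply: HH => t /andP[t0 t1].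
  have Qw : Q (z' + t *: v).
    have -> : z' + t *: v = (1 - t) *: z' + t *: u.
      by rewrite /v scalerBr scalerBl scale1r addrA addrAC.
    by apply: cQ => //; rewrite t1 ltW.
  have h := Hmin _ Qw; rewrite /Bregman in h.
  have e1 : g (z' + t *: v - y) = g (z' - y) + t * g v by rewrite addrAC linearD linearZ.
  have e2 : Dz (z' + t *: v - z) = Dz (z' - z) + t * Dz v by rewrite addrAC linearD linearZ.
  rewrite -/Dz e1 e2 in h.
  rewrite -subr_ge0 in h.
  set LHS := (X in 0 <= X).
  have -> : LHS = g (z' - y) + t * g v + c * (d (z' + t *: v) - d z - (Dz (z' - z) + t * Dz v)) -
    (g (z' - y) + c * (d z' - d z - Dz (z' - z)))   by rewrite /LHS; ring.
  exact: h.
rewrite -subr_ge0 /Bregman.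
have -> : u - z = (z' - z) + v by rewrite /v [RHS]addrC -addrA addKr.
have -> : g (u - y) = g (z' - y) + g v by rewrite -linearD /v; congr (g _); rewrite [RHS]addrC -addrA addKr.
have e3 : 'd d z (z' - z + v) = 'd d z (z' - z) + 'd d z v :> R by apply: raddfD.
exact: (alg_tp (gz := g (z' - y)) (du := d u) (dz := d z) (dz' := d z') e3 H0).
Qed.

Lemma alg_main {R : realFieldType} {fx1 fx fu fy gx1 gx gz gu Vx1y Vzz Vuz' Vuz th P L c del : R} :
  0 < th -> th <= 1 -> 0 < P -> th * c = P * L -> 0 < L ->
  gx1 = (1 - th) * gx + th * gz ->
  fx1 - (fy + gx1) <= L * Vx1y + del ->
  Vx1y <= P * Vzz ->
  fy + gx <= fx -> fy + gu <= fu ->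
  gz + c * Vzz + c * Vuz' <= gu + c * Vuz ->
  1 / P * (fx1 - fu) + L * Vuz' <= (1 - th) / P * (fx - fu) + L * Vuz + del / P.
Proof.
move=> t0 t1 P0 tc L0 eg o1 ts o2 o3 tp.
have h1 : L * Vx1y <= L * (P * Vzz) by rewrite ler_pM2l.
have h2 : (1 - th) * (fy + gx) <= (1 - th) * fx by apply: ler_wpM2l; lra.
have h3 : th * (gz + c * Vzz + c * Vuz') <= th * (gu + c * Vuz) by rewrite ler_pM2l.
have h4 : th * (fy + gu) <= th * fu by rewrite ler_pM2l.
have e1 : th * (c * Vzz) = P * L * Vzz by rewrite mulrA tc.
have e2 : th * (c * Vuz') = P * L * Vuz' by rewrite mulrA tc.
have e3 : th * (c * Vuz) = P * L * Vuz by rewrite mulrA tc.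
have key : fx1 - fu + P * L * Vuz' <= (1 - th) * (fx - fu) + P * L * Vuz + del.
  rewrite !mulrDr in h3 h4 h2. rewrite e1 e2 e3 in h3. subst gx1. lra.
rewrite -subr_ge0.
have -> : (1 - th) / P * (fx - fu) + L * Vuz + del / P - (1 / P * (fx1 - fu) + L * Vuz')
  = ((1 - th) * (fx - fu) + P * L * Vuz + del - (fx1 - fu + P * L * Vuz')) / P.
  by field; rewrite gt_eqF.
by apply: divr_ge0; [rewrite subr_ge0 | exact: ltW].
Qed.

Theorem lemma5 (R : realType) (n : nat)
  (nrm : 'rV[R]_n -> R) (Q : set 'rV[R]_n) (f d : 'rV[R]_n -> R)
  (fdel : 'rV[R]_n -> R) (gdel : 'rV[R]_n -> {linear 'rV[R]_n -> R})
  (gam delta L : R)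
  (theta : nat -> R) (x y z : nat -> 'rV[R]_n) :
  (* setting *)
  is_norm nrm -> closed Q -> is_convex_set Q ->
  convex_on Q f ->
  (exists2 U : set 'rV[R]_n, open U /\ rint Q `<=` U &
     forall u, U u -> differentiable f u) ->
  (forall u, Q u -> differentiable d u) ->
  (forall v, {within Q, continuous (fun u => ('d d u : {linear 'rV[R]_n -> R}) v)}) ->
  strongly_convex_on 1 nrm Q d ->
  (* parameters and assumptions of the lemma *)
  1 < gam <= 2 -> 0 < delta -> 0 < L ->
  rel_smooth L d f Q ->
  triangular_scaling gam d Q ->
  (forall u, Q u -> is_oracle delta L d f Q u (fdel u) (gdel u)) ->
  (* Algorithm AccBPGM-1 *)
  rint Q (x 0%N) -> z 0%N = x 0%N -> theta 0%N = 1 ->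
  (forall k, y k = (1 - theta k) *: x k + theta k *: z k) ->
  (forall k, Q (z k.+1) /\
     forall u, Q u ->
       fdel (y k) + gdel (y k) (z k.+1 - y k)
         + theta k `^ (gam - 1) * L * Bregman d (z k.+1) (z k)
       <= fdel (y k) + gdel (y k) (u - y k)
         + theta k `^ (gam - 1) * L * Bregman d u (z k)) ->
  (forall k, x k.+1 = (1 - theta k) *: x k + theta k *: z k.+1) ->
  (forall k, 0 < theta k.+1 <= 1 /\
     (1 - theta k.+1) / theta k.+1 `^ gam <= 1 / theta k `^ gam) ->
  (* conclusion *)
  forall k (u : 'rV[R]_n), Q u ->
    1 / theta k `^ gam * (f (x k.+1) - f u) + L * Bregman d u (z k.+1)
    <= (1 - theta k) / theta k `^ gam * (f (x k) - f u)
       + L * Bregman d u (z k) + delta / theta k `^ gam.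
Proof.
move=> _ _ cQ _ _ dd _ _ _ _ L0 _ ts orc x0Q ez0 th0 hy hz hx hth k u Qu.
have thk : forall j, 0 < theta j /\ theta j <= 1.
  by case=> [|j]; [rewrite th0 ltr01 lexx | case: (hth j) => /andP[]].
have Qz : forall j, Q (z j) by case=> [|j]; [rewrite ez0; exact: x0Q.1 | exact: (hz j).1].
have Qx : forall j, Q (x j).
  move=> j; elim: j => [|j IH]; first exact: x0Q.1.
  rewrite hx; apply: cQ => //; case: (thk j) => a b; by rewrite b (ltW a).
have Qy : forall j, Q (y j).
  move=> j; rewrite hy; apply: cQ => //; case: (thk j) => a b; by rewrite b (ltW a).
case: (thk k) => t0 t1.
have c0 : 0 < theta k `^ (gam - 1) * L by rewrite mulr_gt0 // powR_gt0.
have hmin : forall w, Q w ->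
   gdel (y k) (z k.+1 - y k) + (theta k `^ (gam - 1) * L) * Bregman d (z k.+1) (z k)
   <= gdel (y k) (w - y k) + (theta k `^ (gam - 1) * L) * Bregman d w (z k).
  by move=> w Qw; have := (hz k).2 w Qw; rewrite -!addrA lerD2l.
have tp := three_point cQ (Qz k.+1) Qu (dd _ (Qz k.+1)) c0 hmin.
have o1 := (orc (y k) (Qy k) (x k.+1) (Qx k.+1)).
have o2 := (orc (y k) (Qy k) (x k) (Qx k)).
have o3 := (orc (y k) (Qy k) u Qu).
case/andP: o1 => _ o1. case/andP: o2 => o2 _. case/andP: o3 => o3 _.
rewrite subr_ge0 in o2. rewrite subr_ge0 in o3.
have tsk := ts (x k) (z k.+1) (z k) (theta k) (Qx k) (Qz k.+1) (Qz k) (ltac:(by rewrite t1 ltW)).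
rewrite -hx -hy in tsk.
have ev : x k.+1 - y k = (1 - theta k) *: (x k - y k) + theta k *: (z k.+1 - y k).
  by rewrite hx; apply/rowP => i; rewrite !mxE; ring.
have eg : gdel (y k) (x k.+1 - y k) =
   (1 - theta k) * gdel (y k) (x k - y k) + theta k * gdel (y k) (z k.+1 - y k).
  by rewrite ev linearD !linearZ.
have tc : theta k * (theta k `^ (gam - 1) * L) = theta k `^ gam * L.
  have p1 : theta k `^ (gam - 1) * theta k `^ 1 = theta k `^ gam.
    by rewrite -powRD ?subrK // (gt_eqF t0) implybT.
  rewrite (powRr1 (ltW t0)) in p1.
  by rewrite mulrA (mulrC (theta k)) p1.
have HH := (alg_main t0 t1 (powR_gt0 gam t0) tc L0 eg o1 tsk o2 o3 tp). exact HH.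
Qed.
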